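(* Let $N$ be a natural number, $P=\{a\subseteq N: |a|\geq 2\}$, and let $\|\cdot\|_3$ be the graph coloring norm on subsets of $P$ (defined in the context). If $A\subseteq P$ and $\|A\|_3=k$, then \[|A|\leq 2^N-2^k\,2^{N/2^k}+2^k-1.\]
   Context: $N=\{0,\ldots,N-1\}$. For $A\subseteq P$ and $z\subseteq N$ let $A\restriction z=\{a\in A: a\subseteq z\}$. The relation ''$\|A\|_3\geq m$'' is defined recursively: $\|A\|_3\geq 0$ always; $\|A\|_3\geq 1$ iff $A\neq\emptyset$; for $m\geq 1$, $\|A\|_3\geq m+1$ iff for every $z\subseteq N$ either $\|A\restriction z\|_3\geq m$ or $\|A\restriction(N\setminus z)\|_3\geq m$. Then $\|A\|_3$ is the largest $m$ with $\|A\|_3\geq m$. *)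

(* Defs.v *)
From mathcomp Require Import all_boot.
From Stdlib Require Import Reals.
Set Implicit Arguments. Unset Strict Implicit. Unset Printing Implicit Defensive.

(* [N] = 'I_N ; subsets of [N] are {set 'I_N}; families A ⊆ P are {set {set 'I_N}}. *)

Definition inP (N : nat) (A : {set {set 'I_N}}) : Prop :=
  forall a, a \in A -> 2 <= #|a|.

Definition restr (N : nat) (A : {set {set 'I_N}}) (z : {set 'I_N}) :
  {set {set 'I_N}} := [set a in A | a \subset z].

Fixpoint norm3_ge (N : nat) (A : {set {set 'I_N}}) (m : nat) {struct m} : bool :=
  match m with
  | 0 => true
  | S m' =>
      match m' with
      | 0 => A != set0
      | _ => [forall z : {set 'I_N},
                norm3_ge (restr A z) m' || norm3_ge (restr A (~: z)) m']
      end
  end.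

Definition norm3_eq (N : nat) (A : {set {set 'I_N}}) (k : nat) : Prop :=
  norm3_ge A k /\ forall m, norm3_ge A m -> m <= k.

(* Main.v *)
Require Import Defs.
From mathcomp Require Import all_boot.
From Stdlib Require Import Reals Lra Lia Psatz.
Notation "a `<=` b" := (is_true (leq a b)) (at level 70, no associativity).

Definition Fb (s k : nat) : R :=
  (2 ^ s - 2 ^ k * Rpower 2 (INR s / 2 ^ k) + 2 ^ k - 1)%R.

Lemma INR_expn2 n : INR (expn 2 n) = (2 ^ n)%R.
Proof.
elim: n => [|n IH]; first by rewrite expn0 /=; lra.
rewrite expnS mult_INR IH /=; lra.
Qed.

Lemma rest_bound (N : nat) (A : {set {set 'I_N}}) (W z : {set 'I_N}) :
  (forall a, a \in A -> a \subset W) ->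
  #|[set a in A | ~~ (a \subset z) & ~~ (a \subset ~: z)]|
  `<=` muln (expn 2 #|W :&: z|).-1 (expn 2 #|W :\: z|).-1.
Proof.
move=> HW.
set X := powerset (W :&: z) :\ set0.
set Y := powerset (W :\: z) :\ set0.
have cX : #|X| = (expn 2 #|W :&: z|).-1.
  by rewrite -card_powerset (cardsD1 set0 (powerset (W :&: z))) !inE sub0set.
have cY : #|Y| = (expn 2 #|W :\: z|).-1.
  by rewrite -card_powerset (cardsD1 set0 (powerset (W :\: z))) !inE sub0set.
rewrite -cX -cY -cardsX.
apply: leq_trans (leq_imset_card (fun p : {set 'I_N} * {set 'I_N} => p.1 :|: p.2) _).
apply: subset_leq_card; apply/subsetP => a.
rewrite inE => /andP [aA /andP [nz nzc]].
apply/imsetP; exists (a :&: z, a :\: z).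
  rewrite inE /= !inE.
  apply/andP; split; apply/andP; split.
  - by rewrite setI_eq0 disjoints_subset.
  - by rewrite setSI // HW.
  - by rewrite setD_eq0.
  - by rewrite setSD // HW.
by rewrite /= setID.
Qed.

Lemma cardU3 (T : finType) (X Y Z : {set T}) : #|X :|: Y :|: Z| `<=` addn (addn #|X| #|Y|) #|Z|.
Proof.
apply: leq_trans (leq_card_setU _ _) _.
by rewrite leq_add2r (leq_card_setU X Y).
Qed.

Lemma main_ind k : forall N (W : {set 'I_N}) (A : {set {set 'I_N}}),
  (forall a, a \in A -> a \subset W) -> ~~ norm3_ge A k.+1 ->
  (INR #|A| <= Fb #|W| k)%R.
Proof.
elim: k => [|k IH] N W A HW.
  rewrite /= negbK => /eqP ->; rewrite cards0 /Fb /=.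
  rewrite Rdiv_1_r Rpower_pow; lra.
rewrite [norm3_ge _ _]/= => /forallPn [z]; rewrite negb_or => /andP [h1 h2].
have H1 := IH N (W :&: z) (restr A z).
have H2 := IH N (W :\: z) (restr A (~: z)).
have {H1} H1 : (INR #|restr A z| <= Fb #|W :&: z| k)%R.
  apply: H1 h1 => a; rewrite inE => /andP [aA az]; by rewrite subsetI HW.
have {H2} H2 : (INR #|restr A (~: z)| <= Fb #|W :\: z| k)%R.
  apply: H2 h2 => a; rewrite inE => /andP [aA az]; by rewrite setDE subsetI HW.
have H3 := @rest_bound N A W z HW.
set B := [set a in A | _] in H3.
have HA : #|A| `<=` addn (addn #|restr A z| #|restr A (~: z)|) #|B|.
  apply: (leq_trans _ (@cardU3 _ (restr A z) (restr A (~: z)) B)); apply: subset_leq_card; apply/subsetP => a aA.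
  rewrite /restr !inE aA /=.
  by case: (boolP (a \subset z)); case: (boolP (a \subset ~: z)).
have Hs := cardsID z W.
set s1 := #|W :&: z| in H1 H3 Hs.
set s2 := #|W :\: z| in H2 H3 Hs.
rewrite -Hs.
have e1 : expn 2 s1 = (expn 2 s1).-1.+1 by rewrite prednK // expn_gt0.
have e2 : expn 2 s2 = (expn 2 s2).-1.+1 by rewrite prednK // expn_gt0.
have HR : (INR #|A| <= INR #|restr A z| + INR #|restr A (~: z)|
            + (2 ^ s1 - 1) * (2 ^ s2 - 1))%R.
  rewrite -!INR_expn2 e1 e2 !S_INR -!plus_INR.
  replace (INR (expn 2 s1).-1 + 1 - 1)%R with (INR (expn 2 s1).-1) by lra.
  replace (INR (expn 2 s2).-1 + 1 - 1)%R with (INR (expn 2 s2).-1) by lra.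
  rewrite -mult_INR -plus_INR; apply: le_INR; apply/leP.
  apply: leq_trans HA _; by rewrite leq_add2l.
apply: Rle_trans HR _.
rewrite /Fb in H1 H2 *.
set K := (2 ^ k)%R.
have Kp : (0 < K)%R by apply: pow_lt; lra.
set u := Rpower 2 (INR s1 / 2 ^ k.+1).
set v := Rpower 2 (INR s2 / 2 ^ k.+1).
have eK : (2 ^ k.+1 = 2 * K)%R by rewrite /K /=.
have eu : Rpower 2 (INR s1 / K) = (u * u)%R.
  rewrite /u -Rpower_plus; congr Rpower; rewrite eK; field; lra.
have ev : Rpower 2 (INR s2 / K) = (v * v)%R.
  rewrite /v -Rpower_plus; congr Rpower; rewrite eK; field; lra.
have euv : Rpower 2 (INR (s1 + s2) / 2 ^ k.+1) = (u * v)%R.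
  rewrite /u /v -Rpower_plus plus_INR; congr Rpower; rewrite eK; field; lra.
rewrite euv pow_add eK.
rewrite eu in H1; rewrite ev in H2.
have : (0 <= K * ((u - v) * (u - v)))%R.
  apply: Rmult_le_pos; [lra | apply: Rle_0_sqr].
rewrite -/K in H1 H2. move=> HH. nra.
Qed.

Theorem theorem5p37 (N : nat) (A : {set {set 'I_N}}) (k : nat) :
  inP A -> norm3_eq A k ->
  (INR #|A| <= 2 ^ N - 2 ^ k * Rpower 2 (INR N / 2 ^ k) + 2 ^ k - 1)%R.
Proof.
move=> _ [_ Hmax].
have H := @main_ind k N setT A (fun a _ => subsetT a).
rewrite cardsT card_ord in H.
apply: H; apply/negP => Hk.
by have := Hmax _ Hk; rewrite ltnn.
Qed.
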